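(* Let $m\ge1$, let $r$ be a rational number with $0\le r<1$, let $k$ be an integer with $1\le k\le m$, and let $\Lambda$ be an antichain in $\mathbb{B}(2m)$ with $\lfloor r k\rfloor+1\le\min_{\lambda\in\Lambda}\rho(\lambda)$. Let $D_0$ be the set of minimal elements (with respect to inclusion) of the family $\bigcup_{\lambda\in\Lambda}\{d\in\mathbb{B}(2m): d\subseteq\lambda,\ \rho(d)=\rho(\lambda)-\lfloor rk\rfloor\}$. For $D\subseteq D_0$ write $W_D=\bigvee_{d\in D}d$. Then \[ \bigl|\mathring{\mathbf{I}}_{r,k}(\mathbb{B}(2m),\Lambda)\bigr|=\binom{m}{k}2^k+\sum_{\substack{D\subseteq D_0\\ |D|>0}}(-1)^{|D|}\sum_{j=0}^{k}\binom{\rho(W_D\vee -W_D)-\rho(W_D)}{j}\binom{m-\tfrac12\rho(W_D\vee-W_D)}{k-j}2^{k-j}. \]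
   Context: For a positive integer $m$, $\pm[1,m]=\{-m,\dots,-1,1,\dots,m\}$. $\mathbb{B}(2m)$ is the Boolean lattice of all subsets of $\pm[1,m]$, with meet $\wedge=\cap$, join $\vee=\cup$, least element $\hat0=\emptyset$, and rank $\rho(b)=|b|$. For $b\in\mathbb{B}(2m)$, $-b=\{-x: x\in b\}$. For $r$, $k$, $\Lambda$ as in the claim, $\mathring{\mathbf{I}}_{r,k}(\mathbb{B}(2m),\Lambda)=\{b\in\mathbb{B}(2m): \rho(b)=k,\ b\wedge -b=\hat0,\ \rho(b\wedge\lambda)>r\cdot k\ \text{for all }\lambda\in\Lambda\}$ (the relatively $r$-blocking $k$-elements for $\Lambda$ containing no pair $\{x,-x\}$). Binomial coefficients $\binom{n}{j}$ are $0$ when $j>n$ or $j<0$. *)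

(* Defs.v *)
From HB Require Import structures.
From mathcomp Require Import all_boot all_order all_algebra.
Set Implicit Arguments. Unset Strict Implicit. Unset Printing Implicit Defensive.
Import Order.TTheory GRing.Theory Num.Theory.
Local Open Scope ring_scope.

(* The ground set +-[1,m]: the element (i, s) stands for  (i+1) if s = true,
   and -(i+1) if s = false. *)
Definition pm (m : nat) : finType := ('I_m * bool)%type.

Definition negpm (m : nat) (x : pm m) : pm m := (x.1, ~~ x.2).

Definition negset (m : nat) (b : {set pm m}) : {set pm m} := negpm (m:=m) @: b.

Definition antichain (m : nat) (L : {set {set pm m}}) : Prop :=
  forall a b, a \in L -> b \in L -> a \subset b -> a = b.

Definition flrk (r : rat) (k : nat) : int := Num.floor (r * k%:R).

Definition Iring (m : nat) (r : rat) (k : nat) (L : {set {set pm m}})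
  : {set {set pm m}} :=
  [set b : {set pm m} | [&& #|b| == k,
                            b :&: negset b == set0 &
                            [forall l in L, r * k%:R < (#|b :&: l|%:R : rat)]]].

Definition Dfam (m : nat) (r : rat) (k : nat) (L : {set {set pm m}})
  : {set {set pm m}} :=
  [set d : {set pm m} | [exists l in L,
      (d \subset l) && ((#|d| : int) == (#|l| : int) - flrk r k)]].

Definition D0 (m : nat) (r : rat) (k : nat) (L : {set {set pm m}})
  : {set {set pm m}} :=
  [set d : {set pm m} | minset (fun e => e \in Dfam r k L) d].

Definition WD (m : nat) (D : {set {set pm m}}) : {set pm m} :=
  \bigcup_(d in D) d.

(* Main.v *)
Require Import Defs.
From HB Require Import structures.
From mathcomp Require Import all_boot all_order all_algebra.
Import Order.TTheory GRing.Theory Num.Theory.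
Local Open Scope ring_scope.
Set Implicit Arguments. Unset Strict Implicit. Unset Printing Implicit Defensive.

Lemma alt_sum (X : finType) (S : {set X}) :
  \sum_(D in powerset S) (-1 : int) ^+ #|D| = (S == set0)%:R.
Proof.
pose n := #|S|.
rewrite (partition_big (fun D : {set X} => (inord #|D| : 'I_n.+1)) predT) //=.
transitivity (\sum_(i < n.+1) ((-1 : int) ^+ i) *+ 'C(n, i)).
  apply: eq_bigr => i _.
  rewrite -(cards_draws S i) -sumr_const.
  apply: eq_big => [D|D].
    rewrite !inE; case sDS: (D \subset S) => //=.
    have le : (#|D| <= n)%N by apply: subset_leq_card.
    apply/eqP/eqP => [<-|Hi]; first by rewrite inordK.
    by apply: val_inj; rewrite /= inordK ?Hi.
  move=> /andP[hD /eqP <-]; rewrite inordK // ltnS subset_leq_card //.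
  by rewrite -powersetE.
have := exprDn (1 : int) (-1) n.
rewrite subrr => E.
transitivity (\sum_(i < n.+1) 1 ^+ (n - i) * (-1 : int) ^+ i *+ 'C(n, i)).
  by apply: eq_bigr => i _; rewrite expr1n mul1r.
rewrite -E {E} -cards_eq0 -/n; case: (n) => [|n']; first by rewrite expr0.
by rewrite expr0n.
Qed.

Lemma cardR (a b : bool) : #|[pred o : option bool | if o is Some s then (if s then a else b) else false]| = (a + b)%N.
Proof.
case: a; case: b.
- by rewrite (@eq_card _ _ [set Some true; Some false]) ?cards2 // => -[[]|]; rewrite !inE.
- by rewrite (@eq_card _ _ [set Some true]) ?cards1 // => -[[]|]; rewrite !inE.
- by rewrite (@eq_card _ _ [set Some false]) ?cards1 // => -[[]|]; rewrite !inE.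
- by rewrite (@eq_card _ _ (set0 : {set option bool})) ?cards0 // => -[[]|]; rewrite !inE.
Qed.

Section Count.
Local Open Scope nat_scope.
Variable m : nat.
Variable W : {set pm m}.
Notation T := (pm m).
Notation FF := {ffun 'I_m -> option bool}.

Definition nopair (b : {set T}) := b :&: negset b == set0.

Lemma in_negset (b : {set T}) (x : T) : (x \in negset b) = (negpm x \in b).
Proof.
have invo : forall y : T, negpm (negpm y) = y by move=> [i s]; rewrite /negpm /= negbK.
apply/imsetP/idP => [[y yb ->]|xb]; first by rewrite invo.
by exists (negpm x); rewrite ?invo.
Qed.

Lemma nopairP (b : {set T}) :
  reflect (forall i, ~~ (((i,true) \in b) && ((i,false) \in b))) (nopair b).
Proof.
apply: (iffP eqP) => [E i|H].
  apply/negP => /andP[h1 h2].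
  have : ((i,true) : T) \in b :&: negset b by rewrite inE h1 in_negset.
  by rewrite E inE.
apply/setP => -[i s]; rewrite !inE in_negset /negpm /=.
by case: s; move: (H i); [|rewrite andbC]; move/negPf.
Qed.

Definition okd (i : 'I_m) (o : option bool) :=
  if o is Some s then ((i, s) : T) \notin W else true.
Definition supp (f : FF) := [set i | f i != None].
Definition enc (f : FF) : {set T} := [set x : T | f x.1 == Some x.2].

Lemma card_enc f : #|enc f| = #|supp f|.
Proof.
have -> : enc f = (fun i => ((i, odflt true (f i)) : T)) @: supp f.
  apply/setP => -[i s]; rewrite !inE /=; apply/eqP/imsetP => [fi|[j hj [-> ->]]].
    by exists i; rewrite ?inE fi //= fi.
  by move: hj; rewrite inE; case: (f j).
by apply: card_imset => i j /(congr1 fst).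
Qed.

Lemma enc_inj : injective enc.
Proof.
move=> f g E; apply/ffunP => i.
have Hf : forall s, (f i == Some s) = (g i == Some s).
  move=> s; have := congr1 (fun b : {set T} => ((i, s) : T) \in b) E.
  by rewrite /= !inE.
case ef: (f i) => [s|]; case eg: (g i) => [t|] //.
- by have := Hf s; rewrite ef eg eqxx => /esym/eqP ->.
- by have := Hf s; rewrite ef eg eqxx.
- by have := Hf t; rewrite ef eg eqxx.
Qed.

Lemma nopair_enc f : nopair (enc f).
Proof.
apply/nopairP => i; rewrite !inE /=.
by apply/negP => /andP[/eqP -> ].
Qed.

Lemma disj_enc f : [disjoint enc f & W] = [forall i, okd i (f i)].
Proof.
rewrite disjoint_subset.
apply/subsetP/forallP => [H i|H [i s]]; rewrite /okd.
  case ef: (f i) => [s|] //.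
  by have := H ((i, s) : T); rewrite inE /= ef eqxx => /(_ isT).
rewrite inE /= => /eqP fi; have := H i; rewrite fi.
by [].
Qed.

Lemma enc_surj b : nopair b -> exists f, b = enc f.
Proof.
move/nopairP => Hb.
exists [ffun i => if ((i,true) : T) \in b then Some true
                  else if ((i,false) : T) \in b then Some false else None].
apply/setP => -[i s]; rewrite inE /= ffunE.
have := Hb i.
case: s; case: (((i,true) : T) \in b); case: (((i,false) : T) \in b) => //.
Qed.

Definition Good k := [set f : FF | (#|supp f| == k) && [forall i, okd i (f i)]].
Definition Nset k :=
  [set b : {set T} | [&& #|b| == k, nopair b & [disjoint b & W]]].

Lemma card_Nset k : #|Nset k| = #|Good k|.
Proof.
have -> : Nset k = enc @: Good k.
  apply/setP => b; rewrite inE; apply/idP/imsetP => [/and3P[hk hn hd]|[f hf ->]].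
    have [f Ef] := enc_surj hn; exists f => //.
    by rewrite inE -card_enc -Ef hk -disj_enc -Ef.
  by move: hf; rewrite inE card_enc nopair_enc disj_enc.
by apply: card_imset; apply: enc_inj.
Qed.


Definition Hs := [set i : 'I_m | (((i,true):T) \in W) != (((i,false):T) \in W)].
Definition Fs := [set i : 'I_m | (((i,true):T) \notin W) && (((i,false):T) \notin W)].
Definition Rf (i : 'I_m) := [pred o : option bool | if o is Some s then ((i,s):T) \notin W else false].

Lemma card_Rf i : #|Rf i| = ((((i,true):T) \notin W) + (((i,false):T) \notin W))%N.
Proof.
rewrite -cardR; apply: eq_card => -[[]|] //.
Qed.

Lemma HsFs : [disjoint Hs & Fs].
Proof.
rewrite -setI_eq0; apply/eqP/setP => i; rewrite !inE.
by case: (((i,true):T) \in W); case: (((i,false):T) \in W).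
Qed.

Lemma supp_ok (f : FF) i : [forall i, okd i (f i)] -> i \in supp f ->
  (i \in Hs) || (i \in Fs).
Proof.
move=> /forallP /(_ i); rewrite /okd !inE.
by case: (f i) => // -[]; case: (((i,true):T) \in W); case: (((i,false):T) \in W).
Qed.

Lemma suppD (f : FF) : [forall i, okd i (f i)] -> supp f :\: Hs = supp f :&: Fs.
Proof.
move=> ok; apply/setP => i; rewrite in_setD in_setI.
case si: (i \in supp f); last by rewrite !andbF ?andFb.
have := supp_ok ok si; rewrite !inE andbT.
by case: (((i,true):T) \in W); case: (((i,false):T) \in W).
Qed.

Definition Qp k (q : 'I_k.+1 * ({set 'I_m} * {set 'I_m})) :=
  [&& q.2.1 \subset Hs, #|q.2.1| == q.1, q.2.2 \subset Fs & #|q.2.2| == k - q.1].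

Lemma card_Good k : #|Good k| =
  \sum_(j < k.+1) 'C(#|Hs|, j) * 'C(#|Fs|, k - j) * 2 ^ (k - j).
Proof.
rewrite -sum1_card.
rewrite (partition_big
  (fun f => (inord #|supp f :&: Hs| : 'I_k.+1, (supp f :&: Hs, supp f :&: Fs)))
  (Qp (k:=k))); last first.
  move=> f; rewrite inE => /andP[/eqP sk ok].
  have le : (#|supp f :&: Hs| <= k)%N by rewrite -sk subset_leq_card // subsetIl.
  rewrite /Qp /= subsetIr subsetIr inordK ?ltnS // eqxx /=.
  by rewrite -sk -(cardsID Hs (supp f)) addKn suppD.
rewrite (eq_bigr (fun q : 'I_k.+1 * ({set 'I_m} * {set 'I_m}) => 2 ^ (k - q.1))); last first.
  move=> -[j [A B]] /and4P[/= hA hAj hB hBj].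
  have AB0 : A :&: B = set0.
    by apply/eqP; rewrite setI_eq0; exact: disjointW hA hB HsFs.
  have AH : B :&: Hs = set0.
    by apply/eqP; rewrite setI_eq0; apply: disjointW hB (subxx _) _; rewrite disjoint_sym HsFs.
  have AF : A :&: Fs = set0.
    by apply/eqP; rewrite setI_eq0; exact: disjointW hA (subxx _) HsFs.
  rewrite sum1dep_card.
  transitivity #|pfamily None (A :|: B) Rf|.
    apply: eq_card => f; rewrite inE.
    apply/andP/pfamilyP => [[hG /eqP hp]|[hs hf]].
      case: hp => _ eA eB.
      move: hG; rewrite inE => /andP[_ ok].
      split.
        apply/subsetP => x; rewrite inE => fx.
        have sx : x \in supp f by rewrite inE.
        by case/orP: (supp_ok ok sx) => h; rewrite in_setU -eA -eB !in_setI sx h ?orbT.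
      move=> x xAB.
      have sx : x \in supp f.
        by move: xAB; rewrite -eA -eB in_setU !in_setI => /orP[/andP[]|/andP[]].
      move: ok => /forallP/(_ x); rewrite /okd inE; move: sx; rewrite inE.
      by case: (f x).
    have es : supp f = A :|: B.
      apply/setP => x; rewrite inE; apply/idP/idP => [fx|xAB].
        by apply: (subsetP hs); rewrite inE.
      by have := hf x xAB; rewrite inE; case: (f x).
    have ok : [forall i, okd i (f i)].
      apply/forallP => x; case xAB: (x \in A :|: B).
        by have := hf x xAB; rewrite /okd inE; case: (f x).
      by move: xAB; rewrite -es inE /okd; case: (f x).
    split.
      rewrite inE ok andbT es cardsU AB0 cards0 subn0 (eqP hAj) (eqP hBj).
      by rewrite subnKC // -ltnS ltn_ord.
    rewrite es setIUl setIUl AH AF setU0 set0U (setIidPl hA) (setIidPl hB).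
    apply/eqP; congr (_, (_, _)); apply: val_inj; rewrite /= inordK (eqP hAj) //.
  rewrite card_pfamily foldrE big_image /=.
  rewrite (eq_bigl [predU A & B]); last by move=> x; rewrite !inE.
  rewrite bigU; last by rewrite -setI_eq0 AB0.
  rewrite (eq_bigr (fun _ => 1)); last first.
    move=> x xA; rewrite card_Rf.
    by have := subsetP hA x xA; rewrite inE; case: (((x,true):T) \in W); case: (((x,false):T) \in W).
  rewrite (eq_bigr (fun _ => 2) (P := fun x => x \in B)); last first.
    move=> x xB; rewrite card_Rf.
    by have := subsetP hB x xB; rewrite inE => /andP[-> ->].
  rewrite !prod_nat_const; change (1 ^ #|A| * 2 ^ #|B| = 2 ^ (k - j)).
  by rewrite exp1n mul1n (eqP hBj).
pose Q2 j (p : {set 'I_m} * {set 'I_m}) :=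
  [&& p.1 \subset Hs, #|p.1| == j, p.2 \subset Fs & #|p.2| == k - j].
transitivity (\sum_(j < k.+1) \sum_(p | Q2 j p) 2 ^ (k - j)).
  by rewrite pair_big_dep; apply: eq_bigl => -[j [A B]].
apply: eq_bigr => j _.
transitivity (\sum_(A : {set 'I_m} | (A \subset Hs) && (#|A| == j))
               \sum_(B : {set 'I_m} | (B \subset Fs) && (#|B| == k - j)) 2 ^ (k - j)).
  by rewrite pair_big_dep; apply: eq_bigl => -[A B] /=; rewrite /Q2 /= !andbA.
have cst : forall (P : pred {set 'I_m}) c, \sum_(B | P B) c = #|[set B | P B]| * c.
  move=> P c; rewrite -sum1dep_card big_distrl /=.
  by apply: eq_bigr => B _; rewrite mul1n.
rewrite (eq_bigr (fun _ => 'C(#|Fs|, k - j) * 2 ^ (k - j))); last first.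
  by move=> A _; rewrite cst -cards_draws.
by rewrite cst mulnA cards_draws.
Qed.

Lemma card_as_sum (I : finType) (A : {set I}) : #|A| = \sum_i (i \in A : nat).
Proof. by rewrite -sum1_card big_mkcond /=; apply: eq_bigr => i _; case: (i \in A). Qed.

Lemma cardT2 (S : {set T}) :
  #|S| = \sum_(i : 'I_m) ((((i,true):T) \in S) + (((i,false):T) \in S)).
Proof.
rewrite card_as_sum.
transitivity (\sum_(p : 'I_m * bool) ((((p.1,p.2):T) \in S) : nat)).
  by apply: eq_bigr => -[i s].
rewrite -(pair_bigA _ (fun i s => ((((i,s):T) \in S) : nat))).
by apply: eq_bigr => i _; rewrite big_bool.
Qed.

Lemma cardWW :
  #|W :|: negset W| = \sum_(i : 'I_m) 2 * ((((i,true):T) \in W) || (((i,false):T) \in W)).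
Proof.
rewrite cardT2; apply: eq_bigr => i _.
rewrite !in_setU !in_negset /negpm /=.
by case: (((i,true):T) \in W); case: (((i,false):T) \in W).
Qed.

Lemma card_Hs : #|Hs| = #|W :|: negset W| - #|W|.
Proof.
rewrite cardWW cardT2 card_as_sum.
have -> : \sum_(i : 'I_m) 2 * ((((i,true):T) \in W) || (((i,false):T) \in W)) =
   \sum_(i : 'I_m) (((((i,true):T) \in W) + (((i,false):T) \in W)) + (i \in Hs)).
  apply: eq_bigr => i _; rewrite inE.
  by case: (((i,true):T) \in W); case: (((i,false):T) \in W).
by rewrite big_split /= addKn.
Qed.

Lemma card_Fs : #|Fs| = m - #|W :|: negset W| %/ 2.
Proof.
rewrite cardWW -big_distrr /= mulKn //.
have E : \sum_(i : 'I_m) (((((i,true):T) \in W) || (((i,false):T) \in W)) + (i \in Fs)) = m.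
  rewrite -[RHS](card_ord m) -sum1_card; apply: eq_bigr => i _; rewrite inE.
  by case: (((i,true):T) \in W); case: (((i,false):T) \in W).
by rewrite -[m in m - _]E big_split /= addKn card_as_sum.
Qed.

Lemma card_Nset_formula k : #|Nset k| = \sum_(j < k.+1)
  'C(#|W :|: negset W| - #|W|, j) * 'C(m - #|W :|: negset W| %/ 2, k - j) * 2 ^ (k - j).
Proof. by rewrite card_Nset card_Good card_Hs card_Fs. Qed.
End Count.

Lemma charac m (r : rat) k (L : {set {set pm m}}) (b : {set pm m})
  (hmin : forall l, l \in L -> flrk r k + 1 <= (#|l| : int)) :
  [forall l in L, r * k%:R < (#|b :&: l|%:R : rat)] =
  [forall d in D0 r k L, ~~ [disjoint b & d]].
Proof.
set f := flrk r k.
have fle : (f%:~R : rat) <= r * k%:R by rewrite /f /flrk; exact: floor_le.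
apply/forallP/forallP => [H d|H l].
  apply/implyP => dD; apply/negP => dis.
  move: dD; rewrite inE => /minsetP[dF _].
  move: dF; rewrite inE => /existsP[l /andP[lL /andP[dl /eqP cd]]].
  have /implyP/(_ lL) lt := H l.
  have c1 : (#|b :&: l| + #|d| <= #|l|)%N.
    rewrite -(cardsID d l) (setIidPr dl) addnC leq_add2l.
    apply: subset_leq_card; apply/subsetP => x; rewrite !inE => /andP[xb xl].
    rewrite xl andbT; apply/negP => xd.
    by rewrite (disjointFr dis xb) in xd.
  have c2 : (#|b :&: l| : int) <= f.
    have h : (#|b :&: l| : int) + #|d| <= #|l| by rewrite -PoszD lez_nat.
    by move: h; rewrite cd -lerBrDr opprB addrC subrK.
  have h2 : ((#|b :&: l| : int)%:~R : rat) <= f%:~R by rewrite ler_int.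
  by have := lt_le_trans lt (le_trans h2 fle); rewrite ltxx.
apply/implyP => lL; rewrite ltNge; apply/negP => le.
have c1 : (#|b :&: l| : int) <= f by rewrite /f /flrk floor_ge_int.
have n0 : 0 <= (#|l| : int) - f.
  rewrite subr_ge0; apply: le_trans (hmin l lL); rewrite lerDl //.
case En: ((#|l| : int) - f) n0 => [nn|nn] // _.
have nle : (nn <= #|l :\: b|)%N.
  rewrite -lez_nat -En -{1}(cardsID b l) PoszD addrAC gerDr subr_le0 setIC //.
have : (0 < #|[set A : {set pm m} | A \subset l :\: b & #|A| == nn]|)%N by rewrite cards_draws bin_gt0.
case/card_gt0P => d; rewrite inE => /andP[dsub /eqP dn].
have dF : d \in Dfam r k L.
  rewrite inE; apply/existsP; exists l; rewrite lL (subset_trans dsub (subsetDl _ _)) /=.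
  by rewrite dn -En.
have [A minA sAd] := minset_exists dF.
have /implyP := H A; rewrite inE; move/(_ minA)/negP; apply.
apply: disjointWr (subset_trans sAd dsub) _.
rewrite -setI_eq0; apply/eqP/setP => x; rewrite !inE.
by case: (x \in b); rewrite ?andbF.
Qed.

Theorem mainTheorem4 (m : nat) (r : rat) (k : nat) (L : {set {set pm m}})
  (hm : (1 <= m)%N) (hr0 : 0 <= r) (hr1 : r < 1)
  (hk1 : (1 <= k)%N) (hkm : (k <= m)%N)
  (hL : antichain L)
  (hmin : forall l, l \in L -> flrk r k + 1 <= (#|l| : int)) :
  (#|Iring r k L| : int) =
    ('C(m, k) * 2 ^ k)%N%:Z +
    \sum_(D in powerset (D0 r k L) | D != set0)
       (-1) ^+ #|D| *
       \sum_(j < k.+1)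
         ('C(#|WD D :|: negset (WD D)| - #|WD D|, j)
          * 'C(m - #|WD D :|: negset (WD D)| %/ 2, k - j)
          * 2 ^ (k - j))%N%:Z.
Proof.
set D0s := D0 r k L.
pose Adm := [set b : {set pm m} | (#|b| == k) && nopair b].
pose Sb (b : {set pm m}) := [set d in D0s | [disjoint b & d]].
have SbE b : (Sb b == set0) = [forall d in D0s, ~~ [disjoint b & d]].
  apply/eqP/forallP => [E d|H].
    apply/implyP => dD; apply/negP => dis.
    have : d \in Sb b by rewrite inE dD dis.
    by rewrite E inE.
  apply/setP => d; rewrite in_set0; apply/negbTE; rewrite in_set.
  by apply/andP => -[dD dis]; move: (H d); rewrite dD dis.
have E1 : (#|Iring r k L| : int) = \sum_(b in Adm) (Sb b == set0)%:R.
  rewrite -sum1_card -natz natr_sum /=.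
  rewrite big_mkcond [RHS]big_mkcond; apply: eq_bigr => b _.
  rewrite !inE charac // SbE /nopair.
  by case: (#|b| == k); case: (b :&: negset b == set0); case: [forall d in D0s, _].
have E2 : forall b, b \in Adm -> (Sb b == set0)%:R =
    \sum_(D in powerset D0s) (if [disjoint b & WD D] then (-1 : int) ^+ #|D| else 0).
  move=> b _; rewrite -alt_sum -big_mkcondr; apply: eq_bigl => D.
  rewrite !powersetE.
  apply/subsetP/andP => [H|[H1 H2] d dD].
    split.
      by apply/subsetP => d /H; rewrite inE => /andP[].
    by rewrite /WD; apply/bigcup_disjointP => d /H; rewrite inE => /andP[].
  rewrite inE (subsetP H1 d dD) /=.
  by move/bigcup_disjointP: H2; apply.
rewrite E1 (eq_bigr _ E2) exchange_big /=.
have E3 : forall D, \sum_(b in Adm) (if [disjoint b & WD D] then (-1:int) ^+ #|D| else 0)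
   = (-1) ^+ #|D| * (#|Nset (WD D) k| : int).
  move=> D; rewrite -big_mkcondr sumr_const -mulr_natr natz.
  congr (_ * Posz _); apply: eq_card => b; rewrite !inE /nopair.
  by rewrite unfold_in /= inE /nopair andbA.
rewrite (eq_bigr _ (fun D _ => E3 D)).
rewrite (bigD1 set0) /=; last by rewrite powersetE sub0set.
congr (_ + _).
  rewrite /WD big_set0 cards0 expr0 mul1r card_Nset_formula /negset imset0 setU0 cards0.
  rewrite subn0 div0n subn0; congr Posz.
  rewrite big_ord_recl big1 ?addn0 => [|j _]; first by rewrite bin0 mul1n subn0.
  by rewrite bin0n /= mul0n.
apply: eq_bigr => D _; congr (_ * _).
rewrite card_Nset_formula -natz natr_sum; apply: eq_bigr => j _.
by rewrite natz.
Qed.
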